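(* Let $v_1,\ldots,v_r\in\mathbb{Z}^n$ with $\sum_{i=1}^r v_i=0$ and $\mathbf{a}=(a_1,\ldots,a_r)\in\mathbb{Z}^r$ be such that $P=\bigcap_{i=1}^r\{x\in\mathbb{R}^n : \langle v_i,x\rangle+a_i\ge 0\}$ is compact and each hyperplane $H_i=\{x:\langle v_i,x\rangle+a_i=0\}$ meets $P$. Then the function $\phi_{\mathbf{a}}:P\to\mathbb{R}_{>0}$, $\phi_{\mathbf{a}}(x)=\prod_{i=1}^r(\langle v_i,x\rangle+a_i)^{\langle v_i,x\rangle+a_i}$ (with $0^0=1$), is convex on $P$, and there is a unique point $m_{\mathbf{a}}$ in the relative interior of $P$ minimizing $\phi_{\mathbf{a}}$.
   Context: The relative interior of $P$ is the interior of $P$ viewed as a subset of the affine span of $P$. *)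

(* Defs.v *)
From HB Require Import structures.
From mathcomp Require Import all_boot all_order all_algebra.
From mathcomp Require Import all_classical all_reals all_analysis.
Set Implicit Arguments. Unset Strict Implicit. Unset Printing Implicit Defensive.
Import Order.TTheory GRing.Theory Num.Theory.
Import numFieldNormedType.Exports.
Local Open Scope classical_set_scope.
Local Open Scope ring_scope.

Definition lform (R : realType) (n r : nat) (v : 'I_r -> 'I_n -> int)
  (a : 'I_r -> int) (i : 'I_r) (x : 'rV[R]_n) : R :=
  \sum_(j < n) (v i j)%:~R * x 0 j + (a i)%:~R.

Definition Ppolytope (R : realType) (n r : nat) (v : 'I_r -> 'I_n -> int)
  (a : 'I_r -> int) : set 'rV[R]_n :=
  [set x | forall i, 0 <= lform v a i x].

(* phi_a(x) = prod_i l_i(x)^{l_i(x)}, with powR satisfying 0 `^ 0 = 1 *)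
Definition phi_a (R : realType) (n r : nat) (v : 'I_r -> 'I_n -> int)
  (a : 'I_r -> int) (x : 'rV[R]_n) : R :=
  \prod_(i < r) (lform v a i x) `^ (lform v a i x).

Definition convex_on (R : realType) (n : nat) (S : set 'rV[R]_n)
  (f : 'rV[R]_n -> R) : Prop :=
  forall x y t, S x -> S y -> 0 <= t <= 1 ->
    f (t *: x + (1 - t) *: y) <= t * f x + (1 - t) * f y.

Definition affine_hull (R : realType) (n : nat) (S : set 'rV[R]_n)
  : set 'rV[R]_n :=
  [set x | exists (k : nat) (c : 'I_k -> R) (p : 'I_k -> 'rV[R]_n),
     (forall l, S (p l)) /\ \sum_(l < k) c l = 1 /\
     x = \sum_(l < k) c l *: p l].

Definition relint (R : realType) (n : nat) (S : set 'rV[R]_n)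
  : set 'rV[R]_n :=
  [set x | S x /\ exists e : R, 0 < e /\
     forall y, affine_hull S y -> `|y - x| < e -> S y].

(* Main.v *)
Require Import Defs.
From HB Require Import structures.
From mathcomp Require Import all_boot all_order all_algebra.
From mathcomp Require Import all_classical all_reals all_analysis.
From mathcomp Require Import ring lra.
Import Order.TTheory GRing.Theory Num.Theory.
Import numFieldNormedType.Exports.
Local Open Scope classical_set_scope.
Local Open Scope ring_scope.
Lemma coord_le {R : realType} n (x : 'rV[R]_n) j : `|x 0 j| <= `|x|.
Proof.
rewrite [X in _ <= X]mx_normrE.
exact: (le_bigmax _ (fun ij : 'I_1 * 'I_n => `|x ij.1 ij.2|) (0, j)).
Qed.

Lemma ln_le_sub1 {R : realType} {z : R} : 0 < z -> ln z <= z - 1.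
Proof. move=> z0; have := expR_ge1Dx (ln z); rewrite lnK ?posrE //; lra. Qed.

Lemma ln_lt_sub1 {R : realType} {z : R} : 0 < z -> z != 1 -> ln z < z - 1.
Proof. move=> z0 z1; have := @expR_gt1Dx R (ln z); rewrite lnK ?posrE // ln_eq0 // z1 => /(_ isT); lra. Qed.

Definition hh {R : realType} (t : R) : R := t * ln t.

Lemma key_ge {R : realType} {a x : R} : 0 <= a -> 0 < x -> a - x <= a * (ln a - ln x).
Proof.
move=> a0 x0; have [->|ap] := eqVneq a 0; first by rewrite mul0r; lra.
have a0' : 0 < a by rewrite lt_def ap.
have := ln_le_sub1 (divr_gt0 x0 a0'); rewrite ln_div ?posrE // => H.
have : a * (ln x - ln a) <= a * (x / a - 1) by rewrite ler_pM2l.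
have E : a * (x / a - 1) = x - a by rewrite mulrBr mulr1 mulrCA divff ?mulr1.
rewrite E; nra.
Qed.

Lemma key_gt {R : realType} {a x : R} : 0 <= a -> 0 < x -> a != x -> a - x < a * (ln a - ln x).
Proof.
move=> a0 x0 ax; have [->|ap] := eqVneq a 0; first by rewrite mul0r; lra.
have a0' : 0 < a by rewrite lt_def ap.
have xa1 : x / a != 1.
  apply/negP => /eqP H; move: ax; rewrite -(divfK ap x) H mul1r eqxx //.
have := ln_lt_sub1 (divr_gt0 x0 a0') xa1; rewrite ln_div ?posrE // => H.
have : a * (ln x - ln a) < a * (x / a - 1) by rewrite ltr_pM2l.
have E : a * (x / a - 1) = x - a by rewrite mulrBr mulr1 mulrCA divff ?mulr1.
rewrite E; nra.
Qed.

Lemma hh_convex {R : realType} (a b t : R) : 0 <= a -> 0 <= b -> 0 <= t <= 1 ->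
  hh (t * a + (1 - t) * b) <= t * hh a + (1 - t) * hh b.
Proof.
move=> a0 b0 /andP[t0 t1]; rewrite /hh.
have ta0 : 0 <= t * a by apply: mulr_ge0.
have tb0 : 0 <= (1 - t) * b by apply: mulr_ge0; lra.
set x := t * a + (1 - t) * b.
have [x0|xp] := eqVneq x 0.
  have ta : t * a = 0 by rewrite /x in x0; lra.
  have tb : (1 - t) * b = 0 by rewrite /x in x0; lra.
  by rewrite x0 mul0r !mulrA ta tb !mul0r addr0.
have x0' : 0 < x by rewrite lt_def xp /x addr_ge0.
have H1 := key_ge a0 x0'; have H2 := key_ge b0 x0'.
have H1' : t * (a - x) <= t * (a * (ln a - ln x)) by rewrite ler_wpM2l.
have H2' : (1 - t) * (b - x) <= (1 - t) * (b * (ln b - ln x)) by rewrite ler_wpM2l //; lra.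
rewrite -subr_ge0.
have -> : t * (a * ln a) + (1 - t) * (b * ln b) - x * ln x =
   t * (a * (ln a - ln x)) + (1 - t) * (b * (ln b - ln x)) by rewrite /x; ring.
have -> : 0 = t * (a - x) + (1 - t) * (b - x) by rewrite /x; ring.
by apply: lerD.
Qed.

Lemma hh_sconvex {R : realType} (a b t : R) : 0 <= a -> 0 <= b -> 0 < t < 1 -> a != b ->
  hh (t * a + (1 - t) * b) < t * hh a + (1 - t) * hh b.
Proof.
move=> a0 b0 /andP[t0 t1] ab; rewrite /hh.
set x := t * a + (1 - t) * b.
have xa : a != x.
  apply/negP => /eqP H; move: ab; rewrite /x in H.
  have : (1 - t) * (b - a) = 0 by lra.
  move/eqP; rewrite mulf_eq0 subr_eq0 => /orP[]/eqP H'; first lra.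
  have E : b = a by lra.
  by rewrite E eqxx.
have x0' : 0 < x.
  rewrite lt_def; apply/andP; split; last by rewrite addr_ge0 // mulr_ge0 //; lra.
  apply/negP => /eqP x0.
  have ta0 : 0 <= t * a by rewrite mulr_ge0 //; lra.
  have tb0 : 0 <= (1 - t) * b by rewrite mulr_ge0 //; lra.
  rewrite /x in x0.
  have ta : t * a = 0 by lra.
  have tb : (1 - t) * b = 0 by lra.
  move: ta tb => /eqP; rewrite mulf_eq0 => /orP[/eqP|/eqP a00]; first lra.
  move/eqP; rewrite mulf_eq0 => /orP[/eqP|/eqP b00]; first lra.
  by move: ab; rewrite a00 b00 eqxx.
have H1 := key_gt a0 x0' xa; have H2 := key_ge b0 x0'.
have H1' : t * (a - x) < t * (a * (ln a - ln x)) by rewrite ltr_pM2l.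
have H2' : (1 - t) * (b - x) <= (1 - t) * (b * (ln b - ln x)) by rewrite ler_wpM2l //; lra.
rewrite -subr_gt0.
have -> : t * (a * ln a) + (1 - t) * (b * ln b) - x * ln x =
   t * (a * (ln a - ln x)) + (1 - t) * (b * (ln b - ln x)) by rewrite /x; ring.
have -> : 0 = t * (a - x) + (1 - t) * (b - x) by rewrite /x; ring.
by apply: ltr_leD.
Qed.

Lemma hh_scale {R : realType} (t b : R) : 0 < t -> 0 <= b -> hh (t * b) = t * hh b + t * b * ln t.
Proof.
move=> t0 b0; rewrite /hh; have [->|bp] := eqVneq b 0; first by rewrite !(mulr0, mul0r) addr0.
have b0' : 0 < b by rewrite lt_def bp.
by rewrite lnM ?posrE //; ring.
Qed.

Lemma expR_convex {R : realType} (x y t : R) : 0 <= t <= 1 ->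
  expR (t * x + (1 - t) * y) <= t * expR x + (1 - t) * expR y.
Proof.
move=> /andP[t0 t1]; set z := t * x + (1 - t) * y.
have Hx : expR z * (1 + (x - z)) <= expR x.
  have -> : expR x = expR (x - z) * expR z by rewrite -expRD subrK.
  by rewrite mulrC ler_wpM2r ?expR_ge0 ?expR_ge1Dx.
have Hy : expR z * (1 + (y - z)) <= expR y.
  have -> : expR y = expR (y - z) * expR z by rewrite -expRD subrK.
  by rewrite mulrC ler_wpM2r ?expR_ge0 ?expR_ge1Dx.
have H1 : t * (expR z * (1 + (x - z))) <= t * expR x by rewrite ler_wpM2l.
have H2 : (1 - t) * (expR z * (1 + (y - z))) <= (1 - t) * expR y by rewrite ler_wpM2l //; lra.
have -> : expR z = t * (expR z * (1 + (x - z))) + (1 - t) * (expR z * (1 + (y - z))) by rewrite /z; ring.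
by apply: lerD.
Qed.
Lemma hh_small {R : realType} (e t : R) : 0 < e -> 0 < t -> t < expR (- (2 / e)) -> `|hh t| < e.
Proof.
move=> e0 t0 td.
set y := - ln t.
have tE : t = expR (- y) by rewrite /y opprK lnK ?posrE.
have yb : 2 / e < y.
  by rewrite /y ltrNr -ltr_expR lnK ?posrE.
have y0 : 0 < y by apply: lt_trans yb; rewrite divr_gt0.
have Ey : 1 + y ^+ 2 / 2 <= expR y.
  have := expR_ge1Dxn 1 (ltW y0). by rewrite /= .
have hE : hh t = - (y / expR y).
  by rewrite /hh tE expRK expRN mulrN mulrC.
rewrite hE normrN ger0_norm; last by rewrite divr_ge0 ?expR_ge0 // ltW.
rewrite ltr_pdivrMr ?expR_gt0 //.
have : y < e * (1 + y ^+ 2 / 2).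
  have H2 : 2 < y * e by rewrite -ltr_pdivrMr.
  nra.
move=> H; apply: (lt_le_trans H); rewrite ler_pM2l //.
Qed.

Lemma ln_cont_neq0 {R : realType} (x : R) : x != 0 -> {for x, continuous (@ln R)}.
Proof.
move=> x0; have [xn|xp] := ltP x 0; last by apply: continuous_ln; rewrite lt_def x0.
apply: (@near_cst_continuous _ _ 0).
near=> t; rewrite ln0 //; near: t.
apply/nbhs_ballP; exists (- x) => /=; first by rewrite oppr_gt0.
move=> t; rewrite /ball /= => H; have := ler_norm (t - x); rewrite distrC => H'.
apply: ltW; lra.
Unshelve. all: by end_near. Qed.

Lemma hh_cont {R : realType} : continuous (@hh R).
Proof.
move=> x; have [->|x0] := eqVneq x 0.
  apply/cvgrPdist_lt => e e0.
  rewrite /hh mul0r; near=> t; rewrite sub0r normrN.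
  have [t0|tp] := leP t 0; first by rewrite ln0 // mulr0 normr0.
  apply: hh_small => //; near: t.
  have := @nbhs0_lt R R _ (expR_gt0 (- (2 / e))).
  apply: filterS => t /(le_lt_trans (ler_norm t)) //.
apply: cvgM; first exact: cvg_id.
exact: ln_cont_neq0.
Unshelve. all: by end_near. Qed.

Lemma lform_aff {R : realType} n r (v : 'I_r -> 'I_n -> int) (a : 'I_r -> int) i
  (x y : 'rV[R]_n) (s : R) :
  lform v a i (s *: x + (1 - s) *: y) = s * lform v a i x + (1 - s) * lform v a i y.
Proof.
rewrite /lform !mulrDr !mulr_sumr.
have -> : \sum_(j < n) (v i j)%:~R * (s *: x + (1 - s) *: y) 0 j =
  \sum_(j < n) (s * ((v i j)%:~R * x 0 j)) + \sum_(j < n) ((1 - s) * ((v i j)%:~R * y 0 j)).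
  by rewrite -big_split /=; apply: eq_bigr => j _; rewrite !mxE; ring.
ring.
Qed.

Lemma lform_comb {R : realType} n r (v : 'I_r -> 'I_n -> int) (a : 'I_r -> int) i
  k (c : 'I_k -> R) (p : 'I_k -> 'rV[R]_n) :
  \sum_(l < k) c l = 1 ->
  lform v a i (\sum_(l < k) c l *: p l) = \sum_(l < k) c l * lform v a i (p l).
Proof.
move=> c1; rewrite /lform.
have -> : \sum_(j < n) (v i j)%:~R * (\sum_(l < k) c l *: p l) 0 j =
   \sum_(l < k) c l * \sum_(j < n) (v i j)%:~R * p l 0 j.
  under eq_bigr => j _ do rewrite summxE mulr_sumr.
  rewrite exchange_big /=; apply: eq_bigr => l _; rewrite mulr_sumr.
  by apply: eq_bigr => j _; rewrite mxE; ring.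
under [RHS]eq_bigr => l _ do rewrite mulrDr.
by rewrite big_split /= -mulr_suml c1 mul1r.
Qed.

Lemma lform_lip {R : realType} n r (v : 'I_r -> 'I_n -> int) (a : 'I_r -> int) i
  (x y : 'rV[R]_n) :
  `|lform v a i y - lform v a i x| <= (\sum_(j < n) `|(v i j)%:~R : R|) * `|y - x|.
Proof.
rewrite /lform.
have -> : \sum_(j < n) (v i j)%:~R * y 0 j + (a i)%:~R - (\sum_(j < n) (v i j)%:~R * x 0 j + (a i)%:~R)
   = \sum_(j < n) (v i j)%:~R * (y - x) 0 j.
  rewrite opprD addrACA subrr addr0 -sumrB; apply: eq_bigr => j _; rewrite !mxE; ring.
apply: (le_trans (ler_norm_sum _ _ _)); rewrite mulr_suml; apply: ler_sum => j _.
by rewrite normrM ler_wpM2l // coord_le.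
Qed.

Lemma lform_cont {R : realType} n r (v : 'I_r -> 'I_n -> int) (a : 'I_r -> int) i :
  continuous (@lform R n r v a i).
Proof.
move=> x; rewrite /lform.
apply: (continuousD (f := fun z : 'rV[R]_n => \sum_(j < n) (v i j)%:~R * z 0 j) (g := fun=> (a i)%:~R)); last exact: cst_continuous.
have Hc : continuous (fun z : 'rV[R]_n => \sum_(j < n) (v i j)%:~R * z 0 j).
  have := @continuous_big R 'I_n +%R 0 xpredT (@add_continuous R) _ (index_enum 'I_n) (fun j (z : 'rV[R]_n) => (v i j)%:~R * z 0 j).
  move=> H; apply: H => j _ z.
  apply: (continuousM (s := fun=> (v i j)%:~R) (t := fun z : 'rV[R]_n => z 0 j)); [exact: cst_continuous | exact: coord_continuous].
exact: Hc.
Qed.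

Definition gg {R : realType} {n r : nat} (v : 'I_r -> 'I_n -> int) (a : 'I_r -> int) (x : 'rV[R]_n) : R :=
  \sum_(i < r) hh (lform v a i x).

Lemma gg_cont {R : realType} n r (v : 'I_r -> 'I_n -> int) (a : 'I_r -> int) :
  continuous (@gg R n r v a).
Proof.
rewrite /gg.
have := @continuous_big R 'I_r +%R 0 xpredT (@add_continuous R) _ (index_enum 'I_r) (fun i (z : 'rV[R]_n) => hh (lform v a i z)).
move=> H; apply: H => i _ z.
apply: continuous_comp; [exact: lform_cont | exact: hh_cont].
Qed.

Lemma phiE {R : realType} n r (v : 'I_r -> 'I_n -> int) (a : 'I_r -> int) (x : 'rV[R]_n) :
  Ppolytope v a x -> phi_a v a x = expR (gg v a x).
Proof.
move=> Px; rewrite /phi_a /gg expR_sum; apply: eq_bigr => i _.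
rewrite /powR /hh; case: eqP => [->|//]; by rewrite mul0r expR0.
Qed.

Theorem mainTheorem2 (R : realType) (n r : nat)
  (v : 'I_r -> 'I_n -> int) (a : 'I_r -> int) :
  (forall j : 'I_n, \sum_(i < r) v i j = 0) ->
  compact (Ppolytope (R := R) v a) ->
  (forall i : 'I_r, exists x : 'rV[R]_n, Ppolytope (R := R) v a x /\ lform (R := R) v a i x = 0) ->
  (forall x : 'rV[R]_n, Ppolytope (R := R) v a x -> 0 < phi_a (R := R) v a x) /\
  convex_on (Ppolytope (R := R) v a) (phi_a (R := R) v a) /\
  exists m : 'rV[R]_n, relint (Ppolytope (R := R) v a) m /\
    (forall x : 'rV[R]_n, Ppolytope (R := R) v a x -> phi_a (R := R) v a m <= phi_a (R := R) v a x) /\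
    (forall m' : 'rV[R]_n, Ppolytope (R := R) v a m' ->
       (forall x : 'rV[R]_n, Ppolytope (R := R) v a x -> phi_a (R := R) v a m' <= phi_a (R := R) v a x) -> m' = m).
Proof.
move=> hsum cP hH.
have Pconv : forall (x y : 'rV[R]_n) t, Ppolytope v a x -> Ppolytope v a y -> 0 <= t <= 1 ->
    Ppolytope v a (t *: x + (1 - t) *: y).
  move=> x y t Px Py /andP[t0 t1] i; rewrite lform_aff.
  apply: addr_ge0; apply: mulr_ge0; [done | exact: Px i | lra | exact: Py i].
split.
  by move=> x Px; rewrite phiE // expR_gt0.
split.
  move=> x y t Px Py t01; rewrite !phiE //; last exact: Pconv.
  have E := expR_convex (gg v a x) (gg v a y) t t01.
  apply: (le_trans _ E); rewrite ler_expR /gg !mulr_sumr -big_split /=.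
  apply: ler_sum => i _; rewrite lform_aff; apply: hh_convex; [exact: Px i | exact: Py i | done].
have [x0 Px0] : exists x, Ppolytope (R := R) v a x.
  case: (ltnP 0 r) => [r0|r0].
    by have [x [Px _]] := hH (Ordinal r0); exists x.
  by exists 0 => -[i hi]; have := leq_trans hi r0.
have cg : {within Ppolytope (R := R) v a, continuous (gg v a)}.
  apply: continuous_subspaceT; exact: gg_cont.
have [m Pm mmin] := compact_EVT_min (ex_intro _ x0 Px0) cP cg.
rewrite inE in Pm.
have mminP : forall x, Ppolytope v a x -> gg v a m <= gg v a x.
  by move=> x Px; apply: mmin; rewrite inE.
have key : forall i : 'I_r, 0 < lform v a i m \/ (forall x : 'rV[R]_n, Ppolytope v a x -> lform v a i x = 0).
  move=> i; have [lp|l0] := ltP 0 (lform v a i m); first by left.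
  right; have lm0 : lform v a i m = 0 by apply/le_anti; rewrite l0 Pm.
  move=> q Pq; have [qp|q0] := ltP 0 (lform v a i q); last by apply/le_anti; rewrite q0 Pq.
  exfalso.
  set b := lform v a i q in qp.
  set G := gg v a q - gg v a m.
  have G0 : 0 <= G by rewrite subr_ge0 mminP.
  set t := expR (- ((G + 1) / b)).
  have t0 : 0 < t by apply: expR_gt0.
  have t1 : t <= 1 by rewrite expR_le1 oppr_le0 divr_ge0 //; [lra | exact: ltW].
  have blnt : b * ln t = - (G + 1) by rewrite expRK mulrN mulrC divfK // gt_eqF.
  set xt := t *: q + (1 - t) *: m.
  have Pxt : Ppolytope v a xt by apply: Pconv => //; rewrite t1 ltW.
  have rest : \sum_(j < r | j != i) hh (lform v a j xt) <=
      t * \sum_(j < r | j != i) hh (lform v a j q) + (1 - t) * \sum_(j < r | j != i) hh (lform v a j m).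
    rewrite !mulr_sumr -big_split /=; apply: ler_sum => j _; rewrite lform_aff.
    apply: hh_convex; [exact: Pq | exact: Pm | by rewrite t1 ltW].
  have termi : hh (lform v a i xt) = t * hh b + t * (b * ln t).
    by rewrite lform_aff lm0 mulr0 addr0 hh_scale ?mulrA // ltW.
  have hm0 : hh (lform v a i m) = 0 by rewrite lm0 /hh mul0r.
  have H := mminP _ Pxt.
  have gxE : gg v a xt = hh (lform v a i xt) + \sum_(j < r | j != i) hh (lform v a j xt) by rewrite /gg (bigD1 i).
  have gqE : gg v a q = hh b + \sum_(j < r | j != i) hh (lform v a j q) by rewrite /gg (bigD1 i).
  have gmE : gg v a m = hh (lform v a i m) + \sum_(j < r | j != i) hh (lform v a j m) by rewrite /gg (bigD1 i).
  have GE : G = gg v a q - gg v a m by [].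
  rewrite gxE termi blnt in H; rewrite hm0 in gmE.
  move: H rest GE gqE gmE G0.
  set Sq := \sum_(j < r | j != i) hh (lform v a j q).
  set Sm := \sum_(j < r | j != i) hh (lform v a j m).
  set Sx := \sum_(j < r | j != i) hh (lform v a j xt).
  move=> H rest GE gqE gmE G0.
  rewrite GE gqE gmE in H.
  lra.
exists m; split; [|split].
- split; first exact: Pm.
  pose C (i : 'I_r) := \sum_(j < n) `|(v i j)%:~R : R|.
  pose F (i : 'I_r) := if 0 < lform v a i m then lform v a i m / (C i + 1) else 1.
  have C0 : forall i, 0 <= C i by move=> i; apply: sumr_ge0 => j _; exact: normr_ge0.
  have F0 : forall i, 0 < F i.
    move=> i; rewrite /F; case: ifP => // lp; apply: divr_gt0 => //.
    by have := C0 i; lra.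
  pose S := \sum_(i < r) (F i)^-1.
  have S0 : 0 <= S by apply: sumr_ge0 => i _; rewrite invr_ge0 ltW.
  exists (1 + S)^-1; split; first by rewrite invr_gt0; lra.
  have eF : forall i, (1 + S)^-1 <= F i.
    move=> i; rewrite -[F i]invrK lef_pV2 ?posrE ?invr_gt0 //; last by lra.
    rewrite /S (bigD1 i) //=.
    have : 0 <= \sum_(j < r | j != i) (F j)^-1 by apply: sumr_ge0 => j _; rewrite invr_ge0 ltW.
    lra.
  move=> y Hy yd i.
  case: (key i) => [lp|l0].
    have Li := @lform_lip R n r v a i m y.
    have Fi : F i = lform v a i m / (C i + 1) by rewrite /F lp.
    have H1 : C i * `|y - m| <= C i * F i.
      by rewrite ler_wpM2l // ltW // (lt_le_trans yd (eF i)).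
    have CF : C i * F i < lform v a i m.
      rewrite Fi mulrA ltr_pdivrMr; last by have := C0 i; lra.
      by have := C0 i; nra.
    have := ler_norm (lform v a i m - lform v a i y); rewrite distrC.
    rewrite -/(C i) in Li.
    lra.
  case: Hy => k [c [p [Pp [c1 ->]]]]; rewrite lform_comb // big1 // => l _.
  by rewrite (l0 _ (Pp l)) mulr0.
- by move=> x Px; rewrite !phiE // ler_expR; exact: mminP.
move=> m' Pm' m'min.
have gmin' : forall x : 'rV[R]_n, Ppolytope v a x -> gg v a m' <= gg v a x.
  by move=> x Px; have := m'min x Px; rewrite !phiE // ler_expR.
have geq : gg v a m' = gg v a m by apply/le_anti; rewrite gmin' // mminP.
have h01 : 0 <= (1 / 2 : R) <= 1 by apply/andP; split; lra.
have h01' : 0 < (1 / 2 : R) < 1 by apply/andP; split; lra.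
case: (boolP [exists j, lform v a j m' != lform v a j m]) => [/existsP [j jne] | /existsPn alleq].
  set w := (1 / 2) *: m' + (1 - 1 / 2) *: m.
  have Pw : Ppolytope v a w by apply: Pconv.
  have : gg v a w < 1 / 2 * gg v a m' + (1 - 1 / 2) * gg v a m.
    rewrite /gg !mulr_sumr -big_split /= (bigD1 j) //= [X in _ < X](bigD1 j) //=.
    apply: ltr_leD.
      by rewrite lform_aff; apply: hh_sconvex; [exact: Pm' j | exact: Pm j | exact: h01' | exact: jne].
    apply: ler_sum => k _; rewrite lform_aff; apply: hh_convex; [exact: Pm' k | exact: Pm k | exact: h01].
  move=> Hlt; have Hle := mminP w Pw; rewrite geq in Hlt.
  move: Hle Hlt; generalize (gg v a w) (gg v a m) => A B H1 H2; exfalso; clear -H1 H2; lra.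
have alleq' : forall k, lform v a k m' = lform v a k m.
  by move=> k; apply/eqP; exact: negbNE (alleq k).
have Ps : forall s : R, Ppolytope v a (s *: m' + (1 - s) *: m).
  move=> s k; rewrite lform_aff alleq'; have := Pm k; lra.
have [M M0 HM] := ex_strict_bound_gt0 (compact_bounded cP).
apply/eqP; apply: contraT => ne.
set d := m' - m.
have d0 : 0 < `|d| by rewrite normr_gt0 subr_eq0.
set s := (M + `|m|) / `|d|.
have s0 : 0 <= s by rewrite divr_ge0 // addr_ge0 // ltW.
have := HM _ (Ps s).
have E : s *: m' + (1 - s) *: m = m + s *: d.
  by rewrite /d scalerBr scalerBl scale1r addrCA.
rewrite /= E => Hlt.
have := ler_normD (m + s *: d) (- m); rewrite addrC addKr normrN normrZ ger0_norm //.
have : s * `|d| = M + `|m| by rewrite /s divfK // gt_eqF.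
lra.
Qed.
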